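(* Let $\mathcal{H}=\bigotimes_{i=1}^n\mathbb{C}^{d_i}$ and let $|\psi\rangle,|\phi\rangle\in\mathcal{H}$ be fully entangled pure states. If there exists a map $\Lambda\in\mathrm{LOCC}_{\mathbb{N}}$ with $\Lambda(|\psi\rangle\langle\psi|)=|\phi\rangle\langle\phi|$, then there exists a map $\Lambda'\in\mathrm{SEP}_1$ with $\Lambda'(|\psi\rangle\langle\psi|)=|\phi\rangle\langle\phi|$.
   Context: A pure state in $\bigotimes_{i=1}^n\mathbb{C}^{d_i}$ is fully entangled if each single-party reduced density matrix $\rho_i$ has rank $d_i$. A CPTP map $\Lambda$ on $\mathcal{B}(\mathcal{H})$ is in $\mathrm{SEP}_1$ if it admits a Kraus decomposition $\Lambda(X)=\sum_iK_iXK_i^\dagger$, $\sum_iK_i^\dagger K_i=\mathbb{1}$, with every $K_i=\bigotimes_{j=1}^nK_i^{(j)}$ and $K_i^{(j)}\in GL(d_j,\mathbb{C})$ for all $i,j$. A CPTP map is in $\mathrm{LOCC}_{\mathbb{N}}$ (with $m$ rounds) if it admits a Kraus decomposition with Kraus operators indexed by multi-indices $i=(i_1,\dots,i_m)$, $K_{(i_1\cdots i_m)}=L_{i_m}(\{i_j\}_{j<m})\cdots L_{i_1}$, where each $L_{i_k}(\{i_j\}_{j<k})=U^{(1)}_{i_k}\otimes\cdots\otimes U^{(s_k-1)}_{i_k}\otimes P^{(s_k)}_{i_k}\otimes U^{(s_k+1)}_{i_k}\otimes\cdots\otimes U^{(n)}_{i_k}$ (all factors depending on $\{i_j\}_{j<k}$),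 the $U$'s are unitary, the party $s_k=s_k(\{i_j\}_{j<k})$, and $\sum_{i_k}(P^{(s_k)}_{i_k})^\dagger P^{(s_k)}_{i_k}=\mathbb{1}$ for every value of $\{i_j\}_{j<k}$; i.e. in each round one party performs a generalized measurement, broadcasts the outcome, and the other parties apply unitaries depending on all previous outcomes. *)

(* Defs.v *)
From HB Require Import structures.
From mathcomp Require Import all_boot all_order all_algebra.
From mathcomp Require Import reals.
From mathcomp Require Import complex.
Set Implicit Arguments. Unset Strict Implicit. Unset Printing Implicit Defensive.
Import Order.TTheory GRing.Theory Num.Theory.
Local Open Scope ring_scope.

Section Multipartite.
Variables (R : realType) (n : nat) (d : 'I_n -> nat).

Definition C := (R[i])%C.

(* basis labels of H = (x)_i C^{d_i} : tuples (x_1,...,x_n), x_i < d_i *)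
Definition Basis := {dffun forall i : 'I_n, 'I_(d i)}.
Definition dimH := #|{: Basis}|.

Definition Op := 'M[C]_dimH.
Definition LocOps := forall i : 'I_n, 'M[C]_(d i).

Definition adj {m p : nat} (A : 'M[C]_(m, p)) : 'M[C]_(p, m) :=
  (map_mx (fun z : C => z^*) A)^T.

Definition unitary {m : nat} (U : 'M[C]_m) : Prop := adj U *m U = 1%:M.

Definition tens (K : LocOps) : Op :=
  \matrix_(a < dimH, b < dimH)
    \prod_(i : 'I_n) K i ((enum_val a : Basis) i) ((enum_val b : Basis) i).

Definition proj (psi : 'cV[C]_dimH) : Op := psi *m adj psi.

Definition normalized (psi : 'cV[C]_dimH) : Prop := adj psi *m psi = 1%:M.

(* single-party reduced density matrix rho_i = Tr_{all j <> i} |psi><psi| *)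
Definition reduced (psi : 'cV[C]_dimH) (i : 'I_n) : 'M[C]_(d i) :=
  \matrix_(a < d i, b < d i)
    \sum_(x : Basis | x i == a)
      \sum_(y : Basis | (y i == b) && [forall j, (j != i) ==> (x j == y j)])
         psi (enum_rank x) ord0 * (psi (enum_rank y) ord0)^*.

Definition fully_entangled (psi : 'cV[C]_dimH) : Prop :=
  forall i : 'I_n, \rank (reduced psi i) = d i.

Definition kraus_apply (Ks : seq Op) (X : Op) : Op :=
  \sum_(K <- Ks) K *m X *m adj K.

Definition SEP1_maps (psi phi : 'cV[C]_dimH) : Prop :=
  exists (k : nat) (K : 'I_k -> LocOps),
    (forall (o : 'I_k) (j : 'I_n), K o j \in unitmx) /\
    \sum_(o < k) adj (tens (K o)) *m tens (K o) = 1%:M /\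
    \sum_(o < k) tens (K o) *m proj psi *m adj (tens (K o)) = proj phi.

(* One LOCC round: party s measures with operators P_o^(s) (sum P^dag P = 1),
   every other party j applies a unitary U_o^(j) depending on the outcome o. *)
Definition local_round (Ls : seq Op) : Prop :=
  exists (s : 'I_n) (k : nat) (L : 'I_k -> LocOps),
    Ls = [seq tens (L o) | o <- enum 'I_k] /\
    (forall (o : 'I_k) (j : 'I_n), j != s -> unitary (L o j)) /\
    \sum_(o < k) adj (L o s) *m L o s = 1%:M.

(* Kraus operators K_(i_1...i_m) = L_{i_m}(i_<m) ... L_{i_1} of an m-round
   LOCC protocol; the list is indexed by outcome histories, and the round
   applied after history j (the j-th element) may depend on j. *)
Inductive LOCC_kraus : nat -> seq Op -> Prop :=
| LOCC0 : LOCC_kraus 0 [:: 1%:M]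
| LOCCS (m : nat) (Ks : seq Op) (Ls : nat -> seq Op) :
    LOCC_kraus m Ks ->
    (forall j, (j < size Ks)%N -> local_round (Ls j)) ->
    LOCC_kraus m.+1
      (flatten [seq [seq L *m nth 0 Ks j | L <- Ls j] | j <- iota 0 (size Ks)]).

Definition LOCCN_maps (psi phi : 'cV[C]_dimH) : Prop :=
  exists (m : nat) (Ks : seq Op),
    LOCC_kraus m Ks /\ kraus_apply Ks (proj psi) = proj phi.

End Multipartite.

(* Main.v *)
Require Import Defs.
From HB Require Import structures.
From mathcomp Require Import all_boot all_order all_algebra.
From mathcomp Require Import reals complex.
Import Order.TTheory GRing.Theory Num.Theory.
Local Open Scope ring_scope.
Set Implicit Arguments. Unset Strict Implicit. Unset Printing Implicit Defensive.

Lemma prod_sum_dffun (R : comNzRingType) (I : finType) (T_ : I -> finType)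
  (F : forall i, T_ i -> R) :
  \prod_(i : I) \sum_(j : T_ i) F i j =
  \sum_(x : {dffun forall i, T_ i}) \prod_(i : I) F i (x i).
Proof.
pose P_ := fun i => [ffun j => F i j].
rewrite (reindex (@dffun_of_fprod I T_)); last first.
  by apply: onW_bij; apply: dffun_of_fprod_bij.
transitivity (\sum_(t : fprod T_) \prod_(i in I) P_ i (t i)); last first.
  by apply: eq_bigr => t _; apply: eq_bigr => i _; rewrite !ffunE.
rewrite big_fprod.
transitivity (\prod_(i : I) \sum_(j : T_ i) P_ i j).
  by apply: eq_bigr => i _; apply: eq_bigr => j _; rewrite ffunE.
under eq_bigr => i _ do rewrite (big_tag (fun i j => P_ i j) i).
rewrite (bigA_distr_big_dep).
by apply: eq_bigr => g _; apply: eq_bigr => i _.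
Qed.

Section Main.
Variables (R : realType) (n : nat) (d : 'I_n -> nat).
Local Notation CC := (C R).
Local Notation B := (Basis d).
Local Notation N := (dimH d).
Local Notation Op := (Op R d).
Local Notation LocOps := (LocOps R d).

Lemma sum_idx (F : 'I_N -> CC) : \sum_(a < N) F a = \sum_(x : B) F (enum_rank x).
Proof.
rewrite (reindex (@enum_rank B)) //; apply: onW_bij.
by exists (fun a : 'I_N => enum_val a : B) => x; rewrite ?enum_rankK ?enum_valK.
Qed.

Lemma tensE (K : LocOps) (x y : B) :
  tens K (enum_rank x) (enum_rank y) = \prod_i K i (x i) (y i).
Proof. by rewrite mxE !enum_rankK. Qed.

Lemma tens_ext (A A' : LocOps) : (forall i, A i = A' i) -> tens A = tens A'.
Proof.
move=> h; apply/matrixP => a b; rewrite !mxE.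
by apply: eq_bigr => i _; rewrite h.
Qed.

Lemma mx_ext_rank (M M' : 'M[CC]_(N, N)) :
  (forall x y : B, M (enum_rank x) (enum_rank y) = M' (enum_rank x) (enum_rank y)) -> M = M'.
Proof.
move=> h; apply/matrixP => a b.
by rewrite -(enum_valK a) -(enum_valK b) h.
Qed.

Lemma tens_mul (A A' : LocOps) :
  tens A *m tens A' = tens (fun i => A i *m A' i).
Proof.
apply: mx_ext_rank => x y.
rewrite mxE sum_idx (tensE (fun i => A i *m A' i)).
transitivity (\sum_(z : B) \prod_i (A i (x i) (z i) * A' i (z i) (y i))).
  apply: eq_bigr => z _; rewrite (tensE A) (tensE A').
  by rewrite -big_split.
rewrite -(prod_sum_dffun (fun i j => A i (x i) j * A' i j (y i))).
by apply: eq_bigr => i _; rewrite mxE.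
Qed.

Lemma tens1 : tens (fun i => 1%:M) = 1%:M :> Op.
Proof.
apply: mx_ext_rank => x y.
rewrite tensE mxE (inj_eq enum_rank_inj).
have [->|nxy] := eqVneq x y.
  by rewrite /= big1 // => i _; rewrite mxE eqxx.
have [i hi] : exists i, x i != y i.
  apply/existsP; rewrite -negb_forall; apply: contra nxy => /forallP h.
  by apply/eqP/ffunP => i; apply/eqP.
by rewrite (bigD1 i) //= mxE (negPf hi) mul0r.
Qed.

Lemma tens0 (A : LocOps) i : A i = 0 -> tens A = 0.
Proof.
move=> h; apply/matrixP => a b; rewrite !mxE (bigD1 i) //= h mxE mul0r //.
Qed.

Lemma adjE m p (A : 'M[CC]_(m, p)) i j : adj A i j = (A j i)^*.
Proof. by rewrite !mxE. Qed.

Lemma adj_mul m p q (A : 'M[CC]_(m, p)) (A' : 'M[CC]_(p, q)) :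
  adj (A *m A') = adj A' *m adj A.
Proof.
apply/matrixP => i j; rewrite adjE !mxE rmorph_sum.
by apply: eq_bigr => k _; rewrite rmorphM /= !adjE mulrC.
Qed.

Lemma adjK m p (A : 'M[CC]_(m, p)) : adj (adj A) = A.
Proof. by apply/matrixP => i j; rewrite !adjE conjCK. Qed.

Lemma adj_sum m p (I : Type) (r : seq I) (F : I -> 'M[CC]_(m, p)) :
  adj (\sum_(k <- r) F k) = \sum_(k <- r) adj (F k).
Proof.
apply/matrixP => i j; rewrite adjE !summxE rmorph_sum.
by apply: eq_bigr => k _; rewrite adjE.
Qed.

Lemma adj_scale m p c (A : 'M[CC]_(m, p)) : adj (c *: A) = c^* *: adj A.
Proof. by apply/matrixP => i j; rewrite adjE !mxE rmorphM. Qed.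

Lemma adjB m p (A A' : 'M[CC]_(m, p)) : adj (A - A') = adj A - adj A'.
Proof. by apply/matrixP => i j; rewrite adjE !mxE rmorphB. Qed.

Lemma adj0 m p : adj (0 : 'M[CC]_(m, p)) = 0.
Proof. by apply/matrixP => i j; rewrite adjE !mxE rmorph0. Qed.

Lemma adj1 m : adj (1%:M : 'M[CC]_m) = 1%:M.
Proof. by apply/matrixP => i j; rewrite adjE !mxE eq_sym rmorphMn rmorph1. Qed.

Lemma adj_tens (A : LocOps) : adj (tens A) = tens (fun i => adj (A i)).
Proof.
apply/matrixP => a b; rewrite adjE !mxE rmorph_prod.
by apply: eq_bigr => i _; rewrite adjE.
Qed.


Definition upd (y : B) i (a : 'I_(d i)) : B :=
  finfun (@dfwith _ (fun j => 'I_(d j)) (fun j => y j) i a).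
Arguments upd y i a : clear implicits.

Lemma upd_in y i a : upd y i a i = a.
Proof. by rewrite /upd ffunE dfwith_in. Qed.

Lemma upd_out y i a j : j != i -> upd y i a j = y j.
Proof. by move=> h; rewrite /upd ffunE dfwith_out // eq_sym. Qed.

Definition agree i (x y : B) := [forall j, (j != i) ==> (x j == y j)].

Lemma slice (G : B -> CC) y i :
  \sum_(z : B | agree i z y) G z = \sum_(a : 'I_(d i)) G (upd y i a).
Proof.
rewrite (reindex_onto (fun a => upd y i a) (fun z => z i)); last first.
  move=> z /forallP hz; apply/ffunP => j.
  have [->|hji] := eqVneq j i; first by rewrite upd_in.
  by rewrite upd_out //; have /implyP/(_ hji)/eqP := hz j.
apply: eq_bigl => a; rewrite upd_in eqxx andbT.
apply/forallP => j; apply/implyP => hj; by rewrite upd_out.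
Qed.

Lemma slot_entry (A : LocOps) (v : 'cV[CC]_N) i (y : B) (r : 'I_(d i)) :
  (forall j, j != i -> A j = 1%:M) ->
  (tens A *m v) (enum_rank (upd y i r)) 0 =
  \sum_(a : 'I_(d i)) A i r a * v (enum_rank (upd y i a)) 0.
Proof.
move=> hA; rewrite mxE sum_idx.
under eq_bigr => z _ do rewrite tensE.
rewrite (bigID (fun z => agree i z y)) /= [X in _ + X]big1 ?addr0; last first.
  move=> z /forallP hz.
  have [j hj] : exists j, ~~ ((j != i) ==> (z j == y j)).
    by apply/existsP; rewrite -negb_forall; apply/forallP.
  move: hj; rewrite negb_imply => /andP[hji hzy].
  rewrite (bigD1 j) //= hA // upd_out // mxE eq_sym (negPf hzy) mul0r mul0r //.
rewrite slice; apply: eq_bigr => a _.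
rewrite (bigD1 i) //= !upd_in big1 ?mulr1 // => j hj.
by rewrite hA // !upd_out // mxE eqxx.
Qed.

Lemma sum_fiber i (F : B -> CC) :
  \sum_(a : 'I_(d i)) \sum_(x : B | x i == a) F x = \sum_(x : B) F x.
Proof. by rewrite (partition_big (fun x : B => x i) predT). Qed.

Lemma red_mul (v : 'cV[CC]_N) i (W : 'M[CC]_(d i)) r b :
  (W *m reduced v i) r b =
  \sum_(y : B | y i == b) (v (enum_rank y) 0)^* *
     \sum_(a : 'I_(d i)) W r a * v (enum_rank (upd y i a)) 0.
Proof.
rewrite mxE.
transitivity (\sum_(a : 'I_(d i)) \sum_(x : B | x i == a)
   \sum_(y : B | (y i == b) && agree i x y)
     W r (x i) * (v (enum_rank x) 0 * (v (enum_rank y) 0)^*)).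
  apply: eq_bigr => a _; rewrite mxE mulr_sumr; apply: eq_bigr => x /eqP hx.
  by rewrite mulr_sumr hx.
rewrite sum_fiber.
transitivity (\sum_(y : B | y i == b) \sum_(x : B | agree i x y)
     W r (x i) * (v (enum_rank x) 0 * (v (enum_rank y) 0)^*)).
  rewrite (exchange_big_dep predT) //=.
  rewrite [RHS]big_mkcond /=; apply: eq_bigr => y _.
  by case: (y i == b) => /=; [|rewrite big1].

apply: eq_bigr => y _; rewrite slice mulr_sumr; apply: eq_bigr => a _.
by rewrite upd_in mulrA mulrC mulrA.
Qed.

Lemma core (v : 'cV[CC]_N) i (A : LocOps) :
  \rank (reduced v i) = d i -> (forall j, j != i -> A j = 1%:M) ->
  tens A *m v = 0 -> A i = 0.
Proof.
move=> hr hA hv.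
have h0 : A i *m reduced v i = 0.
  apply/matrixP => r b; rewrite red_mul mxE big1 // => y _.
  by rewrite -slot_entry // hv mxE mulr0.
have hu : reduced v i \in unitmx by rewrite -row_full_unit /row_full hr.
by rewrite -(mulmxK hu (A i)) h0 mul0mx.
Qed.


Definition dslot (f : LocOps) s (M : 'M[CC]_(d s)) : LocOps :=
  @dfwith _ (fun j => 'M[CC]_(d j)) f s M.
Arguments dslot f s M : clear implicits.

Lemma dslot_in f s M : dslot f s M s = M.
Proof. exact: dfwith_in. Qed.

Lemma dslot_out f s M j : j != s -> dslot f s M j = f j.
Proof. by move=> h; rewrite /dslot dfwith_out // eq_sym. Qed.

Lemma tens_sum_slot k (F : 'I_k -> LocOps) s :
  (forall o j, j != s -> F o j = 1%:M) ->
  \sum_(o < k) tens (F o) = tens (dslot (fun j => 1%:M) s (\sum_(o < k) F o s)).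
Proof.
move=> hF; apply: mx_ext_rank => x y.
rewrite summxE tensE (bigD1 s) //= dslot_in summxE mulr_suml.
apply: eq_bigr => o _; rewrite tensE (bigD1 s) //=; congr (_ * _).
by apply: eq_bigr => j hj; rewrite hF // dslot_out.
Qed.

Lemma round_struct (Ls : seq Op) : local_round Ls ->
  exists s k (L : 'I_k -> LocOps),
    Ls = [seq tens (L o) | o <- enum 'I_k] /\
    (forall o j, j != s -> L o j \in unitmx) /\
    \sum_(o < k) adj (L o s) *m L o s = 1%:M.
Proof.
case=> s [k [L [-> [hU hs]]]]; exists s, k, L; split => //; split => //.
move=> o j hj; have /mulmx1_unit [] := hU o j hj => //.
Qed.

Lemma round_complete (Ls : seq Op) : local_round Ls ->
  \sum_(L <- Ls) adj L *m L = 1%:M.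
Proof.
case=> s [k [L [-> [hU hs]]]].
rewrite big_map big_enum /=.
under eq_bigr => o _ do rewrite adj_tens tens_mul.
rewrite (tens_sum_slot (F := fun o j => adj (L o j) *m L o j) (s := s)); last first.
  by move=> o j hj; apply: hU.
rewrite -tens1; apply: tens_ext => j.
have [->|hj] := eqVneq j s; first by rewrite dslot_in -hs.
by rewrite dslot_out.
Qed.

Lemma adj_self0 m (u : 'cV[CC]_m) : (adj u *m u) 0 0 = 0 -> u = 0.
Proof.
rewrite mxE => h; apply/matrixP => k z; rewrite ord1 mxE.
have hp : forall l : 'I_m, true -> 0 <= adj u 0 l * u l 0.
  by move=> l _; rewrite adjE mulrC -normCK exprn_ge0.
have := psumr_eq0P hp h (i := k) isT.
rewrite adjE mulrC -normCK => /eqP; rewrite expf_eq0 /= normr_eq0 => /eqP.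
by [].
Qed.


Lemma mx11E (X Y : 'M[CC]_1) : X 0 0 = Y 0 0 -> X = Y.
Proof. by move=> h; apply/matrixP => a b; rewrite !ord1. Qed.

Lemma mul11E p (X : 'M[CC]_(1, p)) (Y : 'M[CC]_(p, 1)) (Z : 'M[CC]_(1,1)) :
  (X *m Y *m Z) 0 0 = (X *m Y) 0 0 * Z 0 0.
Proof. by rewrite [in LHS]mxE big_ord1. Qed.

Lemma pure_out (Ks : seq Op) (psi phi : 'cV[CC]_N) :
  normalized phi -> kraus_apply Ks (proj psi) = proj phi ->
  forall K, K \in Ks -> K *m psi = ((adj phi *m (K *m psi)) 0 0) *: phi.
Proof.
move=> hphi hK K hKin.
set v := K *m psi; set c := (adj phi *m v) 0 0; set u := v - c *: phi.
have hpu : adj phi *m u = 0.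
  rewrite /u mulmxBr -scalemxAr hphi; apply: mx11E.
  by rewrite /c !mxE eqxx mulr1 subrr.
have hup : adj u *m phi = 0 by rewrite -[phi]adjK -adj_mul hpu adj0.
pose s K' := (adj u *m (K' *m psi)) 0 0.
have hsum : \sum_(K' <- Ks) s K' * (s K')^* = 0.
  transitivity ((adj u *m proj phi *m u) 0 0); last first.
    by rewrite /proj !mulmxA -(mulmxA _ _ u) hpu mulmx0 mxE.
  rewrite -hK /kraus_apply mulmx_sumr mulmx_suml summxE.
  apply: eq_bigr => K' _.
  have -> : adj u *m (K' *m proj psi *m adj K') *m u =
            (adj u *m (K' *m psi)) *m adj (adj u *m (K' *m psi)).
    by rewrite !adj_mul adjK /proj !mulmxA.
  by rewrite mul11E adjE.
have hs : forall K', K' \in Ks -> s K' = 0.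
  move=> K' hK'.
  have hp : forall K'', true -> 0 <= s K'' * (s K'')^*.
    by move=> K'' _; rewrite -normCK exprn_ge0.
  move/eqP: hsum; rewrite (psumr_eq0 _ hp) => /allP /(_ K' hK') /=.
  by rewrite mul_conjC_eq0 => /eqP.
have hu : u = 0.
  apply: adj_self0.
  have : s K = 0 by apply: hs.
  rewrite /s -/v.
  have -> : v = u + c *: phi by rewrite /u subrK.
  by rewrite mulmxDr -scalemxAr hup scaler0 addr0.
by apply/eqP; rewrite -subr_eq0 -/u hu.
Qed.

Lemma tens_unit (psi phi : 'cV[CC]_N) (Q : LocOps) c :
  fully_entangled phi -> c != 0 -> tens Q *m psi = c *: phi ->
  forall i, Q i \in unitmx.
Proof.
move=> hf hc hQ i; apply: contraT => hn.
set W := kermx (Q i).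
have hW0 : W != 0.
  apply: contraNneq hn => hW.
  have : \rank W = 0%N by rewrite hW mxrank0.
  rewrite mxrank_ker => /eqP; rewrite subn_eq0 => hle.
  rewrite -row_full_unit /row_full eqn_leq rank_leq_col /=.
  by [].
set E := dslot (fun j => 1%:M) i W.
have hEQ : tens E *m tens Q = 0.
  rewrite tens_mul; apply: (tens0 (i := i)).
  by rewrite /E dslot_in mulmx_ker.
have hE : tens E *m phi = 0.
  have : c *: (tens E *m phi) = 0 by rewrite scalemxAr -hQ mulmxA hEQ mul0mx.
  by move/eqP; rewrite scalemx_eq0 (negPf hc) => /eqP.
have := core (hf i) _ hE.
rewrite /E dslot_in => h; move: hW0; rewrite h ?eqxx //.
by move=> j hj; rewrite dslot_out.
Qed.

Lemma tens_kill (psi : 'cV[CC]_N) s (Lo Q : LocOps) :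
  fully_entangled psi -> (forall j, j != s -> Lo j \in unitmx) ->
  (forall j, Q j \in unitmx) -> tens Lo *m tens Q *m psi = 0 -> tens Lo = 0.
Proof.
move=> hf hL hQ h0.
pose Rj := fun j => Lo j *m Q j.
have hR : forall j, j != s -> Rj j \in unitmx by move=> j hj; rewrite unitmx_mul hL ?hQ.
pose M := dslot (fun j => invmx (Rj j)) s 1%:M.
pose E : LocOps := fun j => M j *m Rj j.
have hE : tens E *m psi = 0.
  have -> : tens E = tens M *m (tens Lo *m tens Q) by rewrite !tens_mul.
  by rewrite -mulmxA h0 mulmx0.
have hEj : forall j, j != s -> E j = 1%:M.
  move=> j hj; rewrite /E /M dslot_out // mulVmx //; exact: hR.
have := core (hf s) hEj hE.
rewrite /E /M dslot_in mul1mx /Rj => h.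
apply: (tens0 (i := s)).
by rewrite -(mulmxK (hQ s) (Lo s)) h mul0mx.
Qed.


Definition FG (psi : 'cV[CC]_N) (Ks : seq Op) :=
  forall K, K \in Ks -> K *m psi != 0 ->
  forall Q : LocOps, K = tens Q -> forall j, Q j \in unitmx.

Lemma mem_flatL (Ks : seq Op) (Ls : nat -> seq Op) x :
  x \in flatten [seq [seq L *m nth 0 Ks j | L <- Ls j] | j <- iota 0 (size Ks)] ->
  exists j, (j < size Ks)%N /\ exists2 L, L \in Ls j & x = L *m nth 0 Ks j.
Proof.
move/flattenP => [s /mapP [j hj ->] /mapP [L hL ->]].
exists j; split; last by exists L.
by move: hj; rewrite mem_iota add0n.
Qed.

Lemma mem_flatR (Ks : seq Op) (Ls : nat -> seq Op) j L :
  (j < size Ks)%N -> L \in Ls j ->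
  L *m nth 0 Ks j \in flatten [seq [seq L *m nth 0 Ks j | L <- Ls j] | j <- iota 0 (size Ks)].
Proof.
move=> hj hL; apply/flattenP.
exists [seq L' *m nth 0 Ks j | L' <- Ls j]; last exact: map_f.
by apply: (map_f (fun j => [seq L' *m nth 0 Ks j | L' <- Ls j])); rewrite mem_iota add0n.
Qed.

Lemma locc_ind (psi : 'cV[CC]_N) : psi != 0 -> fully_entangled psi ->
  forall m Ks, LOCC_kraus m Ks ->
  [/\ (forall K, K \in Ks -> exists Q, K = tens Q),
      \sum_(K <- Ks) adj K *m K = 1%:M &
      (FG psi Ks -> forall K, K \in Ks -> K *m psi = 0 -> K = 0)].
Proof.
move=> hpsi hf m Ks hL.
elim: hL => {m Ks} [| m Ks Ls hKs [IHa IHb IHc] hLs].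
  split.
  - by move=> K; rewrite inE => /eqP ->; exists (fun _ => 1%:M); rewrite tens1.
  - by rewrite big_seq1 adj1 mul1mx.
  - move=> _ K; rewrite inE => /eqP -> h; rewrite mul1mx in h; by rewrite h eqxx in hpsi.
have hb : forall j, (j < size Ks)%N ->
    \sum_(L <- Ls j) adj (L *m nth 0 Ks j) *m (L *m nth 0 Ks j) =
    adj (nth 0 Ks j) *m nth 0 Ks j.
  move=> j hj.
  under eq_bigr => L _ do rewrite adj_mul mulmxA -(mulmxA _ (adj L)).
  by rewrite -mulmx_suml -mulmx_sumr (round_complete (hLs j hj)) mulmx1.
split.
- move=> x /mem_flatL [j [hj [L hL ->]]].
  have [s [k [Lo [hLo _]]]] := round_struct (hLs j hj).
  move: hL; rewrite hLo => /mapP [o _ ->].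
  have [Q ->] := IHa _ (mem_nth 0 hj).
  by exists (fun i => Lo o i *m Q i); rewrite tens_mul.
- rewrite big_flatten big_map /= -IHb.
  transitivity (\sum_(j <- iota 0 (size Ks)) adj (nth 0 Ks j) *m nth 0 Ks j); last first.
    by symmetry; rewrite (big_nth 0) /index_iota subn0.
  rewrite big_seq [RHS]big_seq; apply: eq_bigr => j; rewrite mem_iota add0n => hj.
  by rewrite big_map hb.
move=> hFG.
have hFGK : FG psi Ks.
  move=> K hK hKpsi Q hQ j.
  set i0 := index K Ks.
  have hi0 : (i0 < size Ks)%N by rewrite index_mem.
  have hKn : nth 0 Ks i0 = K by rewrite nth_index.
  have [s [k [Lo [hLo [hU hs]]]]] := round_struct (hLs i0 hi0).
  case: (boolP (has (fun L => L *m (K *m psi) != 0) (Ls i0))) => [/hasP [L hL hne] | hno].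
    move: (hL); rewrite hLo => /mapP [o _ hLe].
    have hx := mem_flatR hi0 hL.
    rewrite hKn in hx.
    have := hFG _ hx; rewrite -mulmxA => /(_ hne (fun i => Lo o i *m Q i)).
    rewrite hLe hQ tens_mul => /(_ erefl j).
    by rewrite unitmx_mul => /andP [].
  exfalso; move/negP: hKpsi; apply.
  apply/eqP/adj_self0.
  have := hb _ hi0; rewrite hKn => hb0.
  rewrite -[K *m psi]mul1mx -(round_complete (hLs i0 hi0)).
  rewrite mulmx_suml mulmx_sumr summxE big1_seq // => L hL.
  move/hasPn: hno => /(_ L hL); rewrite negbK => /eqP h0.
  by rewrite -mulmxA mulmxA -adj_mul h0 mulmx0 mxE.
have IH0 := IHc hFGK.
move=> x /mem_flatL [j [hj [L hL ->]]] hx0.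
have hKj := mem_nth 0 hj.
have [s [k [Lo [hLo [hU hs]]]]] := round_struct (hLs j hj).
move: (hL); rewrite hLo => /mapP [o _ hLe].
have [h0|hne] := eqVneq (nth 0 Ks j *m psi) 0.
  by rewrite (IH0 _ hKj h0) mulmx0.
have [Q hQ] := IHa _ hKj.
have hQu := hFGK _ hKj hne _ hQ.
have := @tens_kill psi s (Lo o) Q hf (hU o) hQu.
by rewrite -hQ -hLe => ->; rewrite ?mul0mx.
Qed.


Lemma list_to_idx (Ks : seq Op) :
  (forall K, K \in Ks -> K != 0 -> exists Q : LocOps, K = tens Q /\ forall j, Q j \in unitmx) ->
  exists k (Kf : 'I_k -> LocOps), (forall o j, Kf o j \in unitmx) /\
    forall F : Op -> Op, F 0 = 0 -> \sum_(K <- Ks) F K = \sum_(o < k) F (tens (Kf o)).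
Proof.
elim: Ks => [|K Ks IH] h.
  exists 0%N, (fun _ _ => 1%:M); split; first by case.
  by move=> F _; rewrite big_nil big_ord0.
have [k [Kf [hu hF]]] : exists k (Kf : 'I_k -> LocOps), (forall o j, Kf o j \in unitmx) /\
    forall F : Op -> Op, F 0 = 0 -> \sum_(K <- Ks) F K = \sum_(o < k) F (tens (Kf o)).
  by apply: IH => K' hK'; apply: h; rewrite inE hK' orbT.
case: (eqVneq K 0) => [-> | hK].
  by exists k, Kf; split => // F F0; rewrite big_cons F0 add0r hF.
have [Q [-> hQ]] := h K (mem_head _ _) hK.
exists k.+1, (fun o => if unlift ord0 o is Some o' then Kf o' else Q); split.
  by move=> o j; case: (unlift ord0 o).
move=> F F0; rewrite big_cons big_ord_recl /= unlift_none.
by congr (_ + _); rewrite hF //; apply: eq_bigr => o _; rewrite liftK.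
Qed.

End Main.

Unset Implicit Arguments.
Set Strict Implicit.

Theorem lemma1 (R : realType) (n : nat) (d : 'I_n -> nat)
  (hd : forall i : 'I_n, (0 < d i)%N)
  (psi phi : 'cV[C R]_(dimH d))
  (hpsi : normalized psi) (hphi : normalized phi)
  (fpsi : fully_entangled psi) (fphi : fully_entangled phi) :
  LOCCN_maps psi phi -> SEP1_maps psi phi.
Proof.
move=> [m [Ks [hL hK]]].
have hpsi0 : psi != 0.
  apply/eqP => h0; move: hpsi; rewrite /normalized h0 mulmx0 => /matrixP /(_ 0 0).
  by rewrite !mxE /= => /eqP; rewrite eq_sym oner_eq0.
have [ha hb hc] := locc_ind hpsi0 fpsi hL.
have hFG : FG psi Ks.
  move=> K hKin hKpsi Q hQ j.
  have hv := pure_out hphi hK hKin.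
  set c := (adj phi *m (K *m psi)) 0 0 in hv.
  have hc0 : c != 0.
    by apply: contraNneq hKpsi => h0; rewrite hv h0 scale0r.
  have hT : tens Q *m psi = c *: phi by rewrite -hQ.
  exact: (tens_unit fphi hc0 hT j).
have hz := hc hFG.
have [k [Kf [hu hF]]] := @list_to_idx R n d Ks (fun K hKin hK0 =>
  let: ex_intro Q hQ := ha K hKin in
  ex_intro _ Q (conj hQ (hFG K hKin (contra_neq (hz K hKin) hK0) Q hQ))).
exists k, Kf; split => //; split.
  by rewrite -(hF (fun K => adj K *m K)) ?hb // mulmx0.
by rewrite -(hF (fun K => K *m proj psi *m adj K)) // !mul0mx.
Qed.
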